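(* Let $G=(V,E)$ be a control flow graph and $p$ a predicate node. The graph $A_p$ has at most one nontrivial strongly connected component, and if such a component exists, it is terminal.
   Context: A control flow graph (CFG) is a finite directed graph $G=(V,E)$ in which every node has at most two outgoing edges; nodes with exactly two outgoing edges are predicate nodes. A path from $n_1$ is a nonempty finite or infinite sequence of nodes with each adjacent pair an edge; it is maximal if it is infinite or its last node has no successor. $V_p$ is the set of nodes occurring on all maximal paths from $p$ in $G$. For $V'\subseteq V$, a $V'$-interval from $x$ to $y$ is a finite path $n_1\ldots n_k$ in $G$ with $k\ge 2$, $n_1=x\in V'$, $n_k=y\in V'$, and $n_i\notin V'$ for $1<i<k$. $A_p$ is the directed graph with node set $V_p$ and an edge $(x,y)$ iff there is a $V_p$-interval from $x$ to $y$ in $G$. A strongly connected component (SCC) is trivial if the subgraph it induces has no edge, and nontrivial otherwise; it is terminal if no edge leads from it to a node outside it. *)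

(* Defs.v *)
From mathcomp Require Import all_boot.
From Stdlib Require Import Relations.
Set Implicit Arguments. Unset Strict Implicit. Unset Printing Implicit Defensive.

Definition is_cfg (V : finType) (E : rel V) : Prop :=
  forall x : V, #|[set y | E x y]| <= 2.

Definition is_predicate_node (V : finType) (E : rel V) (p : V) : Prop :=
  #|[set y | E p y]| = 2.

(* v occurs on every maximal path from p: every infinite path from p
   (f 0 = p) and every finite path p :: s whose last node has no successor. *)
Definition Vp (V : finType) (E : rel V) (p : V) (v : V) : Prop :=
  (forall f : nat -> V, f 0 = p -> (forall i, E (f i) (f i.+1)) ->
      exists i, f i = v) /\
  (forall s : seq V, path E p s -> (forall z, ~~ E (last p s) z) ->
      v \in p :: s).

Definition interval (V : finType) (E : rel V) (Vs : V -> Prop) (x y : V) : Prop :=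
  Vs x /\ Vs y /\
  exists s : seq V, path E x (rcons s y) /\ (forall z, z \in s -> ~ Vs z).

Definition Ap (V : finType) (E : rel V) (p : V) : relation V :=
  interval E (Vp E p).

Definition is_scc (V : finType) (E : rel V) (p : V) (C : V -> Prop) : Prop :=
  exists x, Vp E p x /\
    forall y, C y <-> (Vp E p y /\ clos_refl_trans V (Ap E p) x y
                                /\ clos_refl_trans V (Ap E p) y x).

Definition scc_nontrivial (V : finType) (E : rel V) (p : V) (C : V -> Prop) : Prop :=
  exists x y, C x /\ C y /\ Ap E p x y.

Definition scc_terminal (V : finType) (E : rel V) (p : V) (C : V -> Prop) : Prop :=
  forall x y, C x -> Ap E p x y -> C y.

(* Main.v *)
Require Import Defs.
From mathcomp Require Import all_boot.
From Stdlib Require Import Relations Classical.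
Set Implicit Arguments. Unset Strict Implicit.

Lemma mem_last_connect (V : finType) (E : rel V) x s y :
  path E x s -> y \in x :: s -> connect E y (last x s).
Proof.
elim: s x y => [|z s IH] x y /=.
  by move=> _; rewrite mem_seq1 => /eqP ->; exact: connect0.
move=> /andP[exz pzs]; rewrite in_cons => /orP[/eqP ->|ys].
  apply: (connect_trans (connect1 exz)); apply: (IH z z pzs); by rewrite in_cons eqxx.
exact: IH.
Qed.

Lemma mem_first_connect (V : finType) (E : rel V) x s y :
  path E x s -> y \in x :: s -> connect E x y.
Proof.
elim: s x => [|z s IH] x /=.
  by move=> _; rewrite mem_seq1 => /eqP ->; exact: connect0.
move=> /andP[exz pzs]; rewrite in_cons => /orP[/eqP ->|ys].
  exact: connect0.
exact: connect_trans (connect1 exz) (IH z pzs ys).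
Qed.

Lemma reach_Vp (V : finType) (E : rel V) p x : Vp E p x -> connect E p x.
Proof.
move=> [Hinf Hfin].
case: (classic (exists w, connect E p w /\ forall z, ~~ E w z)) => [[w [pw sink]]|H].
  move/connectP: pw => [s ps ew]; subst w.
  exact: mem_first_connect ps (Hfin s ps sink).
have succ : forall w, connect E p w -> exists z, E w z.
  move=> w pw; apply: NNPP => Hn; apply: H; exists w; split => // z.
  by apply/negP => ewz; apply: Hn; exists z.
pose nx := fun y => odflt y [pick z | E y z].
have enx : forall w, connect E p w -> E w (nx w).
  move=> w /succ [z ewz]; rewrite /nx; case: pickP => [z' //|none].
  by have := none z; rewrite ewz.
pose f := fun n => iter n nx p.
have fi : forall i, connect E p (f i).
  elim=> [|i IH]; first exact: connect0.
  exact: connect_trans IH (connect1 (enx _ IH)).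
have [i <-] := Hinf f erefl (fun i => enx _ (fi i)).
exact: fi.
Qed.

Lemma cyc_reach (V : finType) (E : rel V) p a z y :
  connect E p a -> E a z -> connect E z a -> Vp E p y -> connect E y a.
Proof.
move=> /connectP[pi ppi la] eaz /connectP[c0 pc0 lc0] [Hinf _].
pose c := z :: c0.
have pc : path E a c by rewrite /= eaz.
have lc : last a c = a by rewrite /= -lc0.
pose n := size pi. pose k := size c.
have k0 : 0 < k by [].
pose g := fun j => nth a (a :: c) (j %% k).
have gE : forall j, E (g j) (g j.+1).
  move=> j; rewrite /g.
  have mk : j %% k < k by exact: ltn_pmod.
  have -> : nth a (a :: c) (j.+1 %% k) = nth a c (j %% k).
    have -> : j.+1 %% k = (j %% k).+1 %% k by rewrite -addn1 -modnDml addn1.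
    case: (ltngtP (j %% k).+1 k) => [lt|gt|eq].
    - by rewrite modn_small.
    - by move: gt; rewrite ltnNge mk.
    - rewrite eq modnn /= -[in LHS]lc (last_nth a) /=.
      by congr nth; apply/eqP; rewrite -eqSS eq.
  exact: (pathP a pc).
pose f := fun i => if i < n then nth p (p :: pi) i else g (i - n).
have g0 : g 0 = a by rewrite /g mod0n.
have f0 : f 0 = p.
  rewrite /f; case: ifP => [//|]; rewrite sub0n g0 la.
  by move/negbT; rewrite -leqNgt leqn0 size_eq0 => /eqP ->.
have fE : forall i, E (f i) (f i.+1).
  move=> i; rewrite /f.
  case: (ltngtP i.+1 n) => [lt|gt|eq].
  - apply: (pathP p ppi); exact: ltnW.
  - rewrite subSn //; exact: gE.
  - rewrite eq subnn g0 la.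
    have -> : last p pi = nth p pi i by rewrite -nth_last -/n -eq.
    apply: (pathP p ppi); by rewrite -/n -eq.
have [i fiy] := Hinf f f0 fE.
move: fiy; rewrite /f; case: ifP => [lt <-|_ <-].
  rewrite la; apply: (mem_last_connect ppi); by apply: mem_nth; rewrite /= ltnS ltnW.
rewrite -[X in connect _ _ X]lc; apply: (mem_last_connect pc); rewrite /g.
apply: mem_nth; rewrite /= ltnS; exact: ltnW (ltn_pmod _ k0).
Qed.

Lemma Ap_connect (V : finType) (E : rel V) p x y : Ap E p x y -> connect E x y.
Proof.
rewrite /Ap /interval => [[_ [_ [s [ps _]]]]].
by apply/connectP; exists (rcons s y); rewrite ?last_rcons.
Qed.

Lemma crt_connect (V : finType) (E : rel V) p x y :
  clos_refl_trans V (Ap E p) x y -> connect E x y.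
Proof.
elim=> [u v /Ap_connect //|u|u v w _ H1 _ H2]; first exact: connect0.
exact: connect_trans H1 H2.
Qed.

Lemma connect_crt_aux (V : finType) (E : rel V) p s : forall a acc,
  Vp E p a -> (forall z, z \in acc -> ~ Vp E p z) -> path E a (acc ++ s) ->
  Vp E p (last a (acc ++ s)) -> clos_refl_trans V (Ap E p) a (last a (acc ++ s)).
Proof.
elim: s => [|z s IH] a acc Va Hacc.
  rewrite cats0 => _; move: Hacc; case/lastP: acc => [|acc' w] Hacc; first by move=> _; exact: rt_refl.
  rewrite last_rcons => Vw; exfalso; apply: (Hacc w) => //.
  by rewrite mem_rcons mem_head.
case: (classic (Vp E p z)) => [Vz|nVz].
  rewrite cat_path /= => /andP[pacc /andP[ez pzs]] Vl.
  apply: (@rt_trans _ _ _ z).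
    apply: rt_step; split => //; split => //; exists acc; split => //.
    by rewrite rcons_path pacc.
  rewrite last_cat /=.
  have := IH z [::] Vz (fun _ (h : _ \in [::]) => False_ind _ (notF h)).
  rewrite /= => H; apply: H => //.
  by move: Vl; rewrite last_cat.
rewrite -cat_rcons => pa Vl.
apply: (IH a (rcons acc z) Va) => // w; rewrite mem_rcons in_cons.
by case/orP => [/eqP -> //|]; exact: Hacc.
Qed.

Lemma connect_crt (V : finType) (E : rel V) p x y :
  Vp E p x -> Vp E p y -> connect E x y -> clos_refl_trans V (Ap E p) x y.
Proof.
move=> Vx Vy /connectP [s ps ey]; subst y.
by apply: (connect_crt_aux (acc := [::])) => // z; rewrite in_nil.
Qed.

Lemma scc_Vp (V : finType) (E : rel V) p C x : is_scc E p C -> C x -> Vp E p x.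
Proof. by move=> [r [_ HC]] /HC []. Qed.

Lemma scc_conn (V : finType) (E : rel V) p C x y :
  is_scc E p C -> C x -> C y -> connect E x y.
Proof.
move=> [r [_ HC]] /HC [_ [_ xr]] /HC [_ [ry _]].
exact: connect_trans (crt_connect xr) (crt_connect ry).
Qed.

Lemma scc_cycle (V : finType) (E : rel V) p C : is_scc E p C -> scc_nontrivial E p C ->
  exists a z, C a /\ E a z /\ connect E z a.
Proof.
move=> HC [a [b [Ca [Cb]]]]; rewrite /Ap /interval => [[_ [_ [s [ps _]]]]].
have ba := scc_conn HC Cb Ca.
case: s ps => [|w s] /= => [/andP[eab _]|/andP[eaw pw]].
  by exists a, b.
exists a, w; split => //; split => //.
apply: connect_trans ba; apply/connectP; exists (rcons s b) => //.
by rewrite last_rcons.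
Qed.

Lemma scc_sub (V : finType) (E : rel V) p C1 C2 a1 a2 :
  is_scc E p C1 -> is_scc E p C2 -> C1 a1 -> C2 a2 ->
  connect E a1 a2 -> connect E a2 a1 -> forall v, C1 v -> C2 v.
Proof.
move=> H1 H2 Ca1 Ca2 c12 c21 v Cv.
have V1 := scc_Vp H1 Ca1; have V2 := scc_Vp H2 Ca2.
move: H1 H2 Ca1 Ca2 Cv => [r1 [_ HC1]] [r2 [_ HC2]] /HC1 [_ [r1a1 a1r1]] /HC2 [_ [r2a2 a2r2]] /HC1 [Vv [r1v vr1]].
apply/HC2; split => //; split.
  apply: rt_trans r2a2 _; apply: rt_trans (connect_crt V2 V1 c21) _.
  exact: rt_trans a1r1 r1v.
apply: rt_trans vr1 _; apply: rt_trans r1a1 _.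
exact: rt_trans (connect_crt V1 V2 c12) a2r2.
Qed.

Theorem lemma4p6 (V : finType) (E : rel V) (p : V) :
  is_cfg E -> is_predicate_node E p ->
  (forall C1 C2 : V -> Prop,
      is_scc E p C1 -> is_scc E p C2 ->
      scc_nontrivial E p C1 -> scc_nontrivial E p C2 ->
      forall v, C1 v <-> C2 v) /\
  (forall C : V -> Prop,
      is_scc E p C -> scc_nontrivial E p C -> scc_terminal E p C).
Proof.
move=> _ _; split.
  move=> C1 C2 H1 H2 N1 N2.
  have [a1 [z1 [Ca1 [e1 c1]]]] := scc_cycle H1 N1.
  have [a2 [z2 [Ca2 [e2 c2]]]] := scc_cycle H2 N2.
  have V1 := scc_Vp H1 Ca1; have V2 := scc_Vp H2 Ca2.
  have c21 := cyc_reach (reach_Vp V1) e1 c1 V2.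
  have c12 := cyc_reach (reach_Vp V2) e2 c2 V1.
  move=> v; split; [exact: (scc_sub H1 H2 Ca1 Ca2) | exact: (scc_sub H2 H1 Ca2 Ca1)].
move=> C H N x y Cx Axy.
have [a [z [Ca [e c]]]] := scc_cycle H N.
have Va := scc_Vp H Ca; have Vx := scc_Vp H Cx.
have Vy : Vp E p y by case: Axy => _ [].
have ya := cyc_reach (reach_Vp Va) e c Vy.
have yx := connect_trans ya (scc_conn H Ca Cx).
move: H Cx => [r [_ HC]] /HC [_ [rx xr]].
apply/HC; split => //; split.
  exact: rt_trans rx (rt_step _ _ _ _ Axy).
exact: rt_trans (connect_crt Vy Vx yx) xr.
Qed.
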